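(* There is an absolute constant $C>0$ such that the following holds. Let $G$ be a finite group, let $\Gamma\subset\operatorname{Lin}(G)$ be symmetric ($\Gamma=-\Gamma$) and contain the identity $0_{\operatorname{Lin}(G)}$, and suppose $X\subset \operatorname{Lin}(G)$ is a finite set with $\Gamma+\Gamma\subset\operatorname{Span}(X)+\Gamma$. Let $\delta\in(0,2^{-4}]$. Then $$\mathbb{P}_G(\operatorname{LinBohr}(\Gamma\cup X,2\delta))\le \exp(C|X|\log(2|X|))\,\mathbb{P}_G(\operatorname{LinBohr}(\Gamma\cup X,\delta)),$$ where $|X|\log(2|X|)$ is read as $0$ when $X=\emptyset$.
   Context: $\operatorname{Lin}(G)$ is the set of homomorphisms $G\to S^1$, an abelian group written additively: $(\gamma+\gamma')(x)=\gamma(x)\gamma'(x)$, $0_{\operatorname{Lin}(G)}$ is the trivial homomorphism, $-\gamma=\overline{\gamma}$. Sumsets $\Gamma+\Gamma'=\{\gamma+\gamma'\}$. $\operatorname{Span}(X):=\{\sum_{x\in X}\sigma_x x:\sigma\in\{-1,0,1\}^X\}$. For $z\in S^1$, $\|z\|:=(2\pi)^{-1}|\operatorname{Arg} z|$ with $\operatorname{Arg} z\in(-\pi,\pi]$. For $\Lambda\subset\operatorname{Lin}(G)$ and $\delta>0$, $\operatorname{LinBohr}(\Lambda,\delta):=\{x\in G:\|\gamma(x)\|\le\delta\text{ for all }\gamma\in\Lambda\}$. $\mathbb{P}_G(E)=|E|/|G|$. *)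

(* Defs.v *)
From HB Require Import structures.
From mathcomp Require Import all_boot all_order all_algebra all_fingroup.
From mathcomp Require Import all_classical all_reals.
From mathcomp Require Import sequences exp trigo.
From mathcomp Require Import complex.
Set Implicit Arguments. Unset Strict Implicit. Unset Printing Implicit Defensive.
Import Order.TTheory GRing.Theory Num.Theory.
Local Open Scope ring_scope.

Section LinDefs.
Variable R : realType.
Variable gT : finGroupType.

Definition cfun := {ffun gT -> R[i]}.

Definition cabs (z : R[i]) : R := Num.sqrt (complex.Re z ^+ 2 + complex.Im z ^+ 2).

Definition isLin (g : cfun) : Prop :=
  (forall x y : gT, g (x * y)%g = g x * g y) /\ (forall x : gT, cabs (g x) = 1).

(* group law of Lin(G), written additively *)
Definition lin0 : cfun := [ffun => 1].
Definition linadd (g h : cfun) : cfun := [ffun x => g x * h x].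
Definition linopp (g : cfun) : cfun := [ffun x => (g x)^-1].
Definition linmulz (g : cfun) (k : int) : cfun := [ffun x => g x ^ k].

(* Span(X) for a finite set X given as a duplicate-free list *)
Definition Span (X : seq cfun) (g : cfun) : Prop :=
  exists s : seq int,
    size s = size X /\ all (fun k => k \in [:: -1; 0; 1]%R) s /\
    g = \big[linadd/lin0]_(i < size X) linmulz (nth lin0 X i) (nth 0 s i).

(* Arg z in (-pi, pi] for z <> 0 *)
Definition Arg (z : R[i]) : R :=
  if 0 <= complex.Im z then acos (complex.Re z / cabs z) else - acos (complex.Re z / cabs z).

Definition circnorm (z : R[i]) : R := `|Arg z| / (2 * pi).

Definition LinBohr (Lam : cfun -> Prop) (delta : R) : {set gT} :=
  [set x | `[< forall g, Lam g -> circnorm (g x) <= delta >] ].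

Definition probG (E : {set gT}) : R := #|E|%:R / #|[set: gT]|%:R.

End LinDefs.

(* Main.v *)
Require Import Defs.
From HB Require Import structures.
From mathcomp Require Import all_boot all_order all_algebra all_fingroup.
From mathcomp Require Import all_classical all_reals.
From mathcomp Require Import sequences exp trigo.
From mathcomp Require Import complex.
From mathcomp Require Import Rstruct.
From mathcomp Require Import ring lra zify.
From Stdlib Require Import Lia.
From mathcomp Require Import exp trigo.
Import Order.TTheory GRing.Theory Num.Theory.
Local Open Scope ring_scope.
Set Implicit Arguments. Unset Strict Implicit.
Section Circ.
Variable R : realType.
Implicit Types u v : R[i].

Definition unitc u := complex.Re u ^+ 2 + complex.Im u ^+ 2 = 1.

Lemma cabs_unit u : cabs u = 1 -> unitc u.
Proof.
rewrite /cabs /unitc => h.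
have h0 : 0 <= complex.Re u ^+ 2 + complex.Im u ^+ 2 by rewrite addr_ge0 // sqr_ge0.
by rewrite -(sqr_sqrtr h0) h expr1n.
Qed.

Lemma unit_cabs u : unitc u -> cabs u = 1.
Proof. by rewrite /cabs /unitc => ->; rewrite sqrtr1. Qed.

Lemma unitc_Re u : unitc u -> -1 <= complex.Re u <= 1.
Proof.
move=> h; rewrite -ler_norml -(@ler_pXn2r _ 2) // ?inE ?normr_ge0 //.
rewrite real_normK ?num_real // expr1n -h lerDl sqr_ge0 //.
by rewrite nnegrE ler01.
Qed.

Lemma unitcM u v : unitc u -> unitc v -> unitc (u * v).
Proof.
case: u => a b; case: v => c d; rewrite /unitc /= => h1 h2.
rewrite -[1]mulr1 -{1}h1 -h2; ring.
Qed.

Lemma ReV u : unitc u -> complex.Re u^-1 = complex.Re u.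
Proof. case: u => a b; rewrite /unitc /= => ->; by rewrite divr1. Qed.

Lemma ImV u : unitc u -> complex.Im u^-1 = - complex.Im u.
Proof. case: u => a b; rewrite /unitc /= => ->; by rewrite divr1. Qed.

Lemma unitcV u : unitc u -> unitc u^-1.
Proof. move=> h; rewrite /unitc ReV // ImV // sqrrN; exact: h. Qed.

Lemma ReMc u v : complex.Re (u * v) = complex.Re u * complex.Re v - complex.Im u * complex.Im v.
Proof. by case: u => a b; case: v => c d. Qed.
Lemma ImMc u v : complex.Im (u * v) = complex.Re u * complex.Im v + complex.Im u * complex.Re v.
Proof. by case: u => a b; case: v => c d. Qed.

Lemma normArg u : unitc u -> `|Arg u| = acos (complex.Re u).
Proof.
move=> h; rewrite /Arg unit_cabs // divr1.
have h1 := acos_ge0 (unitc_Re h).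
by case: ifP => _; rewrite ?normrN ger0_norm.
Qed.

Lemma ArgE u : unitc u -> cos (Arg u) = complex.Re u /\ sin (Arg u) = complex.Im u.
Proof.
move=> h; have hr := unitc_Re h.
have hc : cos (acos (complex.Re u)) = complex.Re u by apply: acosK; rewrite in_itv.
have hs : sin (acos (complex.Re u)) = `|complex.Im u|.
  rewrite sin_acos // -h addrAC subrr add0r sqrtr_sqr //.
rewrite /Arg unit_cabs // divr1; case: ifP => hi.
  by rewrite hc hs ger0_norm.
rewrite cosN sinN hc hs ltr0_norm ?opprK //; by rewrite ltNge hi.
Qed.

Lemma acos_cos_le (t : R) : acos (cos t) <= `|t|.
Proof.
have h := @acos_lepi R (cos t); move: h; rewrite cos_geN1 cos_le1 => /(_ isT) h.
have [hp|hp] := leP `|t| pi.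
  by rewrite -cos_norm cosK // in_itv /= normr_ge0 hp.
exact: (le_trans h (ltW hp)).
Qed.

Lemma acos_cos_eq (t : R) : `|t| <= pi -> acos (cos t) = `|t|.
Proof. move=> hp; by rewrite -cos_norm cosK // in_itv /= normr_ge0 hp. Qed.

Lemma circnormE u : circnorm u = `|Arg u| / (2 * pi).
Proof. by []. Qed.

Lemma cn_ge0 u : 0 <= circnorm u.
Proof. by rewrite circnormE divr_ge0 // mulr_ge0 // pi_ge0. Qed.

Lemma cn_angle u v (a b : R) : unitc u -> unitc v ->
  complex.Re u = cos a -> complex.Im u = sin a ->
  complex.Re v = cos b -> complex.Im v = sin b ->
  circnorm (u * v) <= `|a + b| / (2 * pi).
Proof.
move=> hu hv h1 h2 h3 h4.
rewrite circnormE (normArg (unitcM hu hv)) ReMc h1 h2 h3 h4 -cosD.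
rewrite ler_pM2r ?invr_gt0 ?mulr_gt0 ?pi_gt0 //; exact: acos_cos_le.
Qed.

Lemma cn_mul u v : unitc u -> unitc v -> circnorm (u * v) <= circnorm u + circnorm v.
Proof.
move=> hu hv; have [a1 a2] := ArgE hu; have [b1 b2] := ArgE hv.
apply: le_trans (cn_angle hu hv (esym a1) (esym a2) (esym b1) (esym b2)) _.
rewrite !circnormE -mulrDl ler_pM2r ?invr_gt0 ?mulr_gt0 ?pi_gt0 //; exact: ler_normD.
Qed.

Lemma cn_inv u : unitc u -> circnorm u^-1 = circnorm u.
Proof. move=> h; by rewrite !circnormE (normArg (unitcV h)) normArg // ReV. Qed.

Lemma cn_div u v : unitc u -> unitc v ->
  circnorm (u^-1 * v) <= `|Arg v - Arg u| / (2 * pi).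
Proof.
move=> hu hv; have [a1 a2] := ArgE hu; have [b1 b2] := ArgE hv.
rewrite addrC; apply: cn_angle => //; first exact: unitcV.
- by rewrite ReV // cosN a1.
- by rewrite ImV // sinN a2.
Qed.

Lemma cn1 : circnorm (1 : R[i]) = 0.
Proof.
have h : unitc (1 : R[i]) by rewrite /unitc /= expr1n expr0n addr0.
by rewrite circnormE normArg // /= acos1 mul0r.
Qed.

Lemma cn_sqr u : unitc u -> circnorm u <= 1 / 4 -> circnorm (u * u) = 2 * circnorm u.
Proof.
move=> hu hn; have [a1 a2] := ArgE hu.
rewrite !circnormE (normArg (unitcM hu hu)) ReMc -a1 -a2 -cosD acos_cos_eq.
  by rewrite -mulr2n normrMn mulr2n; ring.
have hpi := pi_gt0 R.
rewrite -mulr2n normrMn mulr2n; move: hn; rewrite circnormE ler_pdivrMr ?mulr_gt0 // => hn'; lra.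
Qed.
End Circ.

Section Grp.
Variable R : realType.
Variable gT : finGroupType.
Implicit Types g h : cfun R gT.

Lemma lin_unit g x : isLin g -> unitc (g x).
Proof. by case=> _ h; apply: cabs_unit. Qed.

Lemma lin_neq0 g x : isLin g -> g x != 0.
Proof.
move=> hg; apply/eqP => h0; have := lin_unit x hg; rewrite /unitc h0 /=.
by rewrite expr0n addr0 => /eqP; rewrite eq_sym oner_eq0.
Qed.

Lemma lin1 g : isLin g -> g 1%g = 1.
Proof.
move=> hg; have := hg.1 1%g 1%g; rewrite mulg1 => h.
apply: (mulfI (lin_neq0 1%g hg)); by rewrite mulr1 -h.
Qed.

Lemma linV g x : isLin g -> g x^-1%g = (g x)^-1.
Proof.
move=> hg; have := hg.1 x^-1%g x; rewrite mulVg lin1 // => h.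
apply: (mulIf (lin_neq0 x hg)); by rewrite mulVf ?lin_neq0.
Qed.

Lemma linVM g x y : isLin g -> g (x^-1 * y)%g = (g x)^-1 * g y.
Proof. by move=> hg; rewrite hg.1 linV. Qed.

Lemma span_bound (X : seq (cfun R gT)) s z (eta : R) :
  (forall g, g \in X -> isLin g) ->
  (forall g, g \in X -> circnorm (g z) <= eta) ->
  Span X s -> unitc (s z) /\ circnorm (s z) <= eta *+ size X.
Proof.
move=> hX hb [k [hk [hall ->]]].
have -> : eta *+ size X = \sum_(i < size X) eta by rewrite sumr_const card_ord.
apply: (big_ind2 (fun g r => unitc (g z) /\ circnorm (g z) <= r)).
- rewrite /lin0 ffunE cn1; split=> //; by rewrite /unitc /= expr1n expr0n addr0.
- move=> g1 r1 g2 r2 [u1 b1] [u2 b2]; rewrite /linadd ffunE; split; first exact: unitcM.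
  apply: le_trans (cn_mul u1 u2) _; exact: lerD.
- move=> i _; have hin : nth (lin0 R gT) X i \in X by rewrite mem_nth.
  have hl := hX _ hin; have hu := lin_unit z hl.
  have hki : nth 0 k i \in [:: -1; 0; 1] by apply: (all_nthP 0 hall); rewrite hk.
  rewrite /linmulz ffunE; move: hki; rewrite !inE => /orP [/eqP ->|/orP [/eqP ->|/eqP ->]].
  + rewrite exprN1; split; [exact: unitcV | rewrite cn_inv //; exact: hb].
  + rewrite expr0z cn1; split; first by rewrite /unitc /= expr1n expr0n addr0.
    apply: le_trans (cn_ge0 (nth (lin0 R gT) X i z)) (hb _ hin).
  + rewrite expr1z; split=> //; exact: hb.
Qed.
End Grp.

Section Contract.
Variable R : realType.
Variable gT : finGroupType.

Lemma contract (Gam : cfun R gT -> Prop) (X : seq (cfun R gT)) (z : gT) (delta eta : R) :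
  (forall g, Gam g -> isLin g) ->
  (forall g, g \in X -> isLin g) ->
  (forall g h, Gam g -> Gam h ->
       exists s t, Span X s /\ Gam t /\ linadd g h = linadd s t) ->
  0 < delta -> delta <= 1 / 16 -> eta *+ size X <= delta ->
  (forall g, g \in X -> circnorm (g z) <= eta) ->
  (forall g, Gam g -> circnorm (g z) <= 4 * delta) ->
  forall g, Gam g -> circnorm (g z) <= delta.
Proof.
move=> hG hX hsp hd hd1 heta hbX hbG.
have step : forall k : nat, forall g, Gam g ->
    circnorm (g z) <= delta + 3 * delta / 2 ^+ k.
  elim=> [|k IH] g Hg.
    rewrite expr0 divr1; have := hbG g Hg; lra.
  have [s [t [hs [ht he]]]] := hsp g g Hg Hg.
  have e1 : g z * g z = s z * t z.
    by have := congr1 (fun f : cfun R gT => f z) he; rewrite /linadd !ffunE.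
  have [us bs] := @span_bound R gT X s z eta hX hbX hs.
  have ut := lin_unit z (hG t ht).
  have bt := IH t ht.
  have hg4 := hbG g Hg.
  have hsq := cn_sqr (lin_unit z (hG g Hg)) (le_trans hg4 (ltac:(lra) : 4 * delta <= 1/4)).
  have hm := cn_mul us ut; rewrite -e1 hsq in hm.
  have hp : 0 < (2 : R) ^+ k by rewrite exprn_gt0.
  have -> : 3 * delta / 2 ^+ k.+1 = (3 * delta / 2 ^+ k) / 2.
    by rewrite exprSr invfM mulrA.
  set e := 3 * delta / 2 ^+ k in bt *.
  lra.
move=> g Hg; apply/ler_addgt0Pr => eps heps.
pose k := Num.truncn (3 * delta / eps).
have hk : 3 * delta / eps < k.+1%:R by apply: truncnS_gt.
have hk2 : (k.+1%:R : R) <= 2 ^+ k.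
  by rewrite -natrX ler_nat; apply: ltn_expl.
have hp : 0 < (2 : R) ^+ k by rewrite exprn_gt0.
apply: le_trans (step k g Hg) _; rewrite lerD2l.
rewrite ler_pdivrMr // -ler_pdivrMl // mulrC.
apply: le_trans (ltW hk) hk2.
Qed.
End Contract.

Lemma count_bound (R : realType) (n : nat) :
  (((4 * maxn n 1).+1 ^ n)%N%:R : R) <=
  expR (if n == 0%N then 0 else 3 * n%:R * ln (2 * n%:R)).
Proof.
case: n => [|n]; first by rewrite /= expR0 expn0.
rewrite /= (mulrC 3) -mulrA expRM_natl.
have h2 : (0 : R) < 2 * n.+1%:R by rewrite mulr_gt0 // ltr0n.
have -> : (3 : R) * ln (2 * n.+1%:R) = 3%:R * ln (2 * n.+1%:R) by [].
rewrite expRM_natl lnK ?posrE // -(natrM R 2) -!natrX ler_nat -expnM mulnC expnM.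
rewrite leq_exp2r //.
have -> : maxn n.+1 1 = n.+1 by apply/maxn_idPl.
rewrite expnS expnS expn1.
have h : (1 <= 2 * n.+1)%N by [].
nia.
Qed.

Lemma main_gen (R : realType) (gT : finGroupType) (Gam : cfun R gT -> Prop)
         (X : seq (cfun R gT)) (delta : R) :
    (forall g, Gam g -> isLin g) ->
    (forall g, Gam g -> Gam (linopp g)) ->
    Gam (lin0 R gT) ->
    uniq X ->
    (forall g, g \in X -> isLin g) ->
    (forall g h, Gam g -> Gam h ->
       exists s t, Span X s /\ Gam t /\ linadd g h = linadd s t) ->
    0 < delta -> delta <= 1 / 16 ->
    let GX := fun g => Gam g \/ g \in X in
    probG R (LinBohr GX (2 * delta)) <=
      expR (if size X == 0%N then 0
            else 3 * (size X)%:R * ln (2 * (size X)%:R)) *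
      probG R (LinBohr GX delta).
Proof.
move=> hG hN h0 hU hX hsp hd hd1; rewrite [X in is_true X]/=; set GX := (fun g => Gam g \/ g \in X).
set n := size X; set m := maxn n 1.
have hm : (0 < m)%N by rewrite leq_max orbT.
have hmR : (0 : R) < m%:R by rewrite ltr0n.
set eta := delta / m%:R.
have heta : 0 < eta by rewrite divr_gt0.
have hetaX : eta *+ n <= delta.
  rewrite -mulr_natr /eta mulrAC ler_pdivrMr // ler_pM2l // ler_nat leq_maxl //.
have hetad : eta <= delta.
  by rewrite /eta ler_pdivrMr // ler_peMr ?(ltW hd) // ler1n.
have hpi := pi_gt0 R.
set c := 2 * pi * eta.
have hc : 0 < c by apply: mulr_gt0 => //; apply: mulr_gt0.
set A := LinBohr GX (2 * delta); set B := LinBohr GX delta.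
have memA : forall x, x \in A -> forall g, GX g -> circnorm (g x) <= 2 * delta.
  by move=> x; rewrite inE => /asboolP.
have memB : forall x, (forall g, GX g -> circnorm (g x) <= delta) -> x \in B.
  by move=> x hx; rewrite inE; apply/asboolP.
pose xi (i : 'I_n) := nth (lin0 R gT) X i.
have xiX : forall i, xi i \in X by move=> i; rewrite mem_nth.
pose fl x i := Num.floor (Arg (xi i x) / c).
have flb : forall x i, x \in A -> - (2 * m)%:Z <= fl x i <= (2 * m)%:Z.
  move=> x i hx.
  have h := memA x hx (xi i) (or_intror (xiX i)).
  rewrite circnormE ler_pdivrMr ?mulr_gt0 // in h.
  have e : (2 * m)%:R * c = 2 * delta * (2 * pi).
    rewrite /c /eta natrM; field; by rewrite lt0r_neq0.
  have hy : `|Arg (xi i x) / c| <= (2 * m)%:R.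
    rewrite normrM [`|c^-1|]gtr0_norm ?invr_gt0 // ler_pdivrMr // e //.
  move: hy; rewrite ler_norml => /andP [hy1 hy2].
  have e2 : (((2 * m)%N)%:Z)%:~R = ((2 * m)%N)%:R :> R by [].
  apply/andP; split.
    by rewrite /fl floor_ge_int rmorphN /= e2.
  rewrite /fl -(intrKfloor (R:=R) (2 * m)%:Z); apply: le_floor.
  by rewrite e2.
pose key x : {ffun 'I_n -> 'I_(4 * m).+1} :=
  [ffun i => inord (absz (fl x i + (2 * m)%:Z))].
have keyE : forall x i, x \in A -> ((key x i : nat)%:Z = fl x i + (2 * m)%:Z).
  move=> x i hx; have := flb x i hx; rewrite /key ffunE => /andP [l1 l2].
  rewrite inordK; first by rewrite gez0_abs //; lia.
  rewrite ltnS; lia.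
have flE : forall x y i, x \in A -> y \in A -> key x = key y -> fl x i = fl y i.
  move=> x y i hx hy hk; have := keyE x i hx; rewrite hk keyE // => /addIr -> //.
have bX : forall x y, x \in A -> y \in A -> key x = key y ->
    forall g, g \in X -> circnorm (g (x^-1 * y)%g) <= eta.
  move=> x y hx hy hk g hg.
  have hi : (index g X < n)%N by rewrite index_mem.
  pose i := Ordinal hi.
  have -> : g = xi i by rewrite /xi /= nth_index.
  have hl := hX _ (xiX i).
  rewrite linVM //; apply: le_trans (cn_div (lin_unit x hl) (lin_unit y hl)) _.
  have := flE x y i hx hy hk; rewrite /fl => hf.
  set a := Arg (xi i x) in hf *; set b := Arg (xi i y) in hf *.
  have /andP [f1 f2] := floor_itv (a / c).
  have /andP [f3 f4] := floor_itv (b / c).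
  rewrite hf in f1 f2.
  rewrite rmorphD /= in f2 f4.
  set f := (Num.floor (b / c))%:~R in f1 f2 f3 f4.
  have hab : `|b / c - a / c| <= 1.
    rewrite ler_norml; apply/andP; split; lra.
  have e3 : b - a = (b / c - a / c) * c by rewrite mulrBl !divfK // lt0r_neq0.
  rewrite e3 normrM (gtr0_norm hc).
  have -> : `|b / c - a / c| * c / (2 * pi) = eta * `|b / c - a / c|.
    have hpi2 : (2 : R) * pi != 0 by rewrite lt0r_neq0 // mulr_gt0.
    rewrite /c (mulrC (2 * pi) eta) mulrA mulfK //; exact: mulrC.
  by apply: ler_piMr => //; exact: ltW.
have inB : forall x y, x \in A -> y \in A -> key x = key y -> (x^-1 * y)%g \in B.
  move=> x y hx hy hk.
  have hbX := bX x y hx hy hk.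
  have hbG : forall g, Gam g -> circnorm (g (x^-1 * y)%g) <= 4 * delta.
    move=> g hg; have hl := hG g hg.
    rewrite linVM //; apply: le_trans (cn_mul (unitcV (lin_unit x hl)) (lin_unit y hl)) _.
    rewrite cn_inv; last exact: lin_unit.
    have := memA x hx g (or_introl hg); have := memA y hy g (or_introl hg); lra.
  have hc2 := contract hG hX hsp hd hd1 hetaX hbX hbG.
  apply: memB => g [hg|hg]; first exact: hc2.
  exact: le_trans (hbX g hg) hetad.
pose rep k := odflt 1%g [pick y in A | key y == k].
have repP : forall x, x \in A -> rep (key x) \in A /\ key (rep (key x)) = key x.
  move=> x hx; rewrite /rep; case: pickP => [y /andP [hy /eqP hk]|h] //=.
  by have := h x; rewrite hx eqxx.
pose F x := (key x, ((rep (key x))^-1 * x)%g).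
have Finj : {in A &, injective F}.
  move=> x y hx hy [hk hm2]; rewrite hk in hm2; exact: mulgI hm2.
have Fsub : F @: A \subset finset.setX [set: {ffun 'I_n -> 'I_(4 * m).+1}] B.
  apply/fintype.subsetP => _ /imsetP [x hx ->]; rewrite finset.in_setX finset.in_setT /=.
  have [h1 h2] := repP x hx; exact: inB.
have hcard : (#|A| <= ((4 * m).+1 ^ n) * #|B|)%N.
  rewrite -(card_in_imset Finj).
  apply: leq_trans (subset_leq_card Fsub) _.
  by rewrite cardsX cardsT card_ffun !card_ord.
have hG0 : (0 < #|[set: gT]|)%N by apply/card_gt0P; exists 1%g; rewrite inE.
rewrite /probG mulrA ler_pM2r ?invr_gt0 ?ltr0n //.
apply: le_trans (_ : (((4 * m).+1 ^ n) * #|B|)%N%:R <= _).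
  by rewrite ler_nat.
rewrite natrM ler_wpM2r // ?ler0n //.
exact: count_bound.
Qed.

Unset Implicit Arguments.

Theorem proposition5p1 :
  exists C : Rdefinitions.R, 0 < C /\
  forall (gT : finGroupType) (Gam : cfun Rdefinitions.R gT -> Prop)
         (X : seq (cfun Rdefinitions.R gT)) (delta : Rdefinitions.R),
    (forall g, Gam g -> isLin g) ->
    (forall g, Gam g -> Gam (linopp g)) ->
    Gam (lin0 Rdefinitions.R gT) ->
    uniq X ->
    (forall g, g \in X -> isLin g) ->
    (forall g h, Gam g -> Gam h ->
       exists s t, Span X s /\ Gam t /\ linadd g h = linadd s t) ->
    0 < delta -> delta <= 1 / 16 ->
    let GX := fun g => Gam g \/ g \in X in
    probG Rdefinitions.R (LinBohr GX (2 * delta)) <=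
      expR (if size X == 0%N then 0
            else C * (size X)%:R * ln (2 * (size X)%:R)) *
      probG Rdefinitions.R (LinBohr GX delta).
Proof.
exists 3; split; first by [].
move=> gT Gam X delta; exact: main_gen.
Qed.
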